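(* Let $A=(\alpha_n)_{n\in\mathbb{N}}$ and $B=(\beta_m)_{m\in\mathbb{N}}$ be sequences of positive real numbers with $\alpha_j\neq\alpha_\ell$ and $\beta_j\neq\beta_\ell$ for all $1\le j<\ell<\infty$. Consider urn model II with these weights, and let $X_{n,m}$ be the number of white balls remaining when the process stops, started from $n$ white and $m$ black balls. Then for $n,m\ge 1$ and $1\le k\le n$, \[ \mathbb{P}\{X_{n,m}=k\}=\alpha_k\sum_{j=k}^{n}\frac{\alpha_j^{m+n-k-1}}{\Big(\prod_{\substack{\ell=k\\ \ell\neq j}}^{n}(\alpha_j-\alpha_\ell)\Big)\Big(\prod_{h=1}^{m}(\alpha_j+\beta_h)\Big)}=\alpha_k\sum_{\ell=1}^{m}\frac{\beta_\ell^{n+m-1-k}}{\Big(\prod_{j=k}^{n}(\beta_\ell+\alpha_j)\Big)\Big(\prod_{\substack{h=1\\ h\neq\ell}}^{m}(\beta_\ell-\beta_h)\Big)}, \] and for $n,m\ge 1$, \[ \mathbb{P}\{X_{n,m}=0\}=1-\sum_{j=1}^{n}\frac{\alpha_j^{n+m-1}}{\Big(\prod_{\substack{\ell=1\\ \ell\neq j}}^{n}(\alpha_j-\alpha_\ell)\Big)\Big(\prod_{h=1}^{m}(\alpha_j+\beta_h)\Big)}=\sum_{\ell=1}^{m}\frac{\beta_\ell^{n+m-1}}{\Big(\prod_{j=1}^{n}(\beta_\ell+\alpha_j)\Big)\Big(\prod_{\substack{h=1\\ h\neq\ell}}^{m}(\beta_\ell-\beta_h)\Big)}. \]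
   Context: Urn model II (OK Corral urn with general weights): an urn initially contains $n$ white and $m$ black balls. At each step, if the urn currently contains $n'$ white and $m'$ black balls, a white ball is drawn with probability $\beta_{m'}/(\alpha_{n'}+\beta_{m'})$ and a black ball with probability $\alpha_{n'}/(\alpha_{n'}+\beta_{m'})$; the drawn ball is discarded. The process stops as soon as one colour is exhausted. $X_{n,m}$ denotes the number of white balls in the urn when the process stops ($0$ if the white balls are exhausted first). Empty products equal $1$. *)

(* Defs.v *)
From mathcomp Require Import all_boot all_order all_algebra.
Set Implicit Arguments. Unset Strict Implicit. Unset Printing Implicit Defensive.
Import Order.TTheory GRing.Theory Num.Theory.
Local Open Scope ring_scope.

(* Urn model II (OK Corral urn with general weights a = alpha, b = beta).
   [urnP a b n m k] = P{X_{n,m} = k}: the probability that, starting from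
   n white and m black balls, the process stops with exactly k white balls.
   Defined by first-step analysis (the process stops after at most n+m steps):
   - n = 0 : white exhausted, X = 0;
   - m = 0 (n > 0) : black exhausted, X = n;
   - otherwise, a white ball is drawn with prob. b m/(a n + b m) (-> (n-1,m))
     and a black ball with prob. a n/(a n + b m) (-> (n,m-1)). *)
Fixpoint urnP {R : realFieldType} (a b : nat -> R) (n m k : nat) {struct n} : R :=
  match n with
  | 0 => (k == 0)%:R
  | n'.+1 =>
      (fix g (m : nat) : R :=
         match m with
         | 0 => (k == n'.+1)%:R
         | m'.+1 => b m'.+1 / (a n'.+1 + b m'.+1) * urnP a b n' m'.+1 k
                    + a n'.+1 / (a n'.+1 + b m'.+1) * g m'
         end) m
  end.

(* Main.v *)
Require Import Defs.
From mathcomp Require Import all_boot all_order all_algebra zify.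
From mathcomp.algebra_tactics Require Import ring.
Import Order.TTheory GRing.Theory Num.Theory.
Local Open Scope ring_scope.

Section Lagrange.
Variable R : fieldType.
Variable T : eqType.
Variable c : T -> R.

Definition Lg (s : seq T) p :=
  \sum_(i <- s) c i ^+ p / \prod_(j <- s | j != i) (c i - c j).

Lemma prod_diff_neq0 s i : uniq s -> {in s &, injective c} -> i \in s ->
  \prod_(j <- s | j != i) (c i - c j) != 0.
Proof.
move=> us ic is_; rewrite prodf_seq_neq0; apply/allP => j js; apply/implyP => ji.
rewrite subr_eq0; apply/eqP => h; move/eqP: ji; apply; apply: ic => //.
Qed.

Lemma Lg_rem s p i0 : uniq s -> {in s &, injective c} -> i0 \in s ->
  Lg s p.+1 = c i0 * Lg s p + Lg (rem i0 s) p.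
Proof.
move=> us ic i0s; have Hp := perm_to_rem i0s.
have ur : uniq (i0 :: rem i0 s) by rewrite -(perm_uniq Hp).
have ic' : {in i0 :: rem i0 s &, injective c}.
  by move=> x y; rewrite -!(perm_mem Hp); apply: ic.
rewrite /Lg (perm_big _ Hp) [X in _ = c i0 * X + _](perm_big _ Hp).
under eq_bigr => i _ do rewrite (perm_big _ Hp).
under [X in _ = c i0 * X + _]eq_bigr => i _ do rewrite (perm_big _ Hp).
have := @prod_diff_neq0 _ i0 ur ic' (mem_head i0 _).
rewrite !big_cons eqxx /= mulrDr -addrA => hD.
congr (_ + _); first by rewrite exprS mulrA.
rewrite mulr_sumr -big_split /=.
apply: eq_big_seq => i ir.
have ii0 : (i0 != i).
  by apply/eqP => e; move: ur ir; rewrite -e /= => /andP[/negP].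
have hi : i \in i0 :: rem i0 s by rewrite inE ir orbT.
have := @prod_diff_neq0 _ i ur ic' hi; rewrite big_cons ii0 => hQ.
have hQ' : \prod_(j <- rem i0 s | j != i) (c i - c j) != 0.
  by move: hQ; rewrite mulf_eq0 negb_or => /andP[].
have hd : c i - c i0 != 0.
  rewrite subr_eq0; apply/eqP => e; move/eqP: ii0; apply; apply: ic'.
  - by rewrite mem_head.
  - exact: hi.
  - by move: e => /esym.
rewrite exprS; field; by rewrite hd hQ'.
Qed.

Lemma Lg_main n : forall s, size s = n.+1 -> uniq s -> {in s &, injective c} ->
  forall p, (p <= n)%N -> Lg s p = (p == n)%:R.
Proof.
elim: n => [|n IH] s.
  case: s => [|x [|y t]] //= _ _ _ p; rewrite leqn0 => /eqP ->.
  by rewrite /Lg !big_cons !big_nil eqxx /= expr0 divr1 addr0.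
case: s => [|x0 [|x1 t]] //= [st] us ic.
have x01 : x0 != x1 by move: us => /= /andP[]; rewrite inE negb_or => /andP[].
set s := [:: x0, x1 & t].
have e1 p := @Lg_rem s p x0 us ic (mem_head x0 _).
have e2' p : Lg s p.+1 = c x1 * Lg s p + Lg (x0 :: t) p.
  have := @Lg_rem s p x1 us ic (_ : x1 \in s).
  rewrite !inE eqxx orbT => /(_ isT) ->; congr (_ + _).
  by rewrite /s /= (negbTE x01) eqxx.
have ic1 : {in x1 :: t &, injective c}.
  by move=> u v hu hv; apply: ic; rewrite inE ?hu ?hv orbT.
have ic0 : {in x0 :: t &, injective c}.
  move=> u v; rewrite !inE => hu hv; apply: ic; rewrite !inE.
    by case/orP: hu => ->; rewrite ?orbT.
  by case/orP: hv => ->; rewrite ?orbT.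
have u1 : uniq (x1 :: t) by move: us => /= /andP[_].
have u0 : uniq (x0 :: t).
  by move: us => /= /and3P[]; rewrite inE negb_or => /andP[_ ->] _ ->.
have I1 := IH (x1 :: t) ltac:(by rewrite /= st) u1 ic1.
have I0 := IH (x0 :: t) ltac:(by rewrite /= st) u0 ic0.
have d01 : c x1 - c x0 != 0.
  rewrite subr_eq0; apply/eqP => e; move/eqP: x01; apply.
  by apply: ic; rewrite ?inE ?eqxx ?orbT //; apply/esym.
have small p : (p <= n)%N -> Lg s p = 0.
  move=> hp; have := e2' p; rewrite e1 /= eqxx I1 // I0 // => /eqP.
  rewrite (inj_eq (addIr _)) -subr_eq0 -mulrBl mulf_eq0 => /orP[|/eqP //].
  by rewrite subr_eq0 eq_sym -subr_eq0 (negbTE d01).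
move=> p; rewrite leq_eqVlt => /orP[/eqP ->|hp].
  by rewrite e1 /= eqxx small // I1 // !eqxx mulr0 add0r.
rewrite small // ; have -> : (p == n.+1) = false by apply/negbTE; rewrite neq_ltn hp.
by [].
Qed.
End Lagrange.
Arguments Lg {R T}.
Arguments Lg_main {R T c n}.
Section G.
Variable R : realFieldType.

Definition G (x y : nat -> R) k n m N :=
  \sum_(k <= j < n.+1) x j ^+ N /
     ((\prod_(k <= l < n.+1 | l != j) (x j - x l)) * \prod_(1 <= h < m.+1) (x j + y h)).

Lemma prod_nat_neq0 (m n : nat) (P : pred nat) (F : nat -> R) :
  (forall i, (m <= i < n)%N -> P i -> F i != 0) -> \prod_(m <= i < n | P i) F i != 0.
Proof.
move=> H; rewrite prodf_seq_neq0; apply/allP => i; rewrite mem_index_iota => hi.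
by apply/implyP; exact: H.
Qed.

Lemma G_rec x y k n m N (hx : forall i, 0 < x i) (hy : forall i, 0 < y i)
  (hd : forall j l, (k <= j)%N -> (j < l)%N -> (l <= n.+1)%N -> x j != x l)
  (hk : (k <= n.+1)%N) :
  (x n.+1 + y m.+1) * G x y k n.+1 m.+1 N.+1 =
  y m.+1 * G x y k n m.+1 N + x n.+1 * G x y k n.+1 m N.
Proof.
have hxy j h : x j + y h != 0 by apply: lt0r_neq0; apply: addr_gt0.
have hdiff j l : (k <= j <= n.+1)%N -> (k <= l <= n.+1)%N -> j != l -> x j - x l != 0.
  move=> /andP[kj jn] /andP[kl ln]; rewrite subr_eq0 neq_ltn => /orP[] h.
    by apply: hd.
  by rewrite eq_sym; apply: hd.
rewrite /G (big_nat_recr _ _ _ hk) /= [X in _ = _ + _ * X](big_nat_recr _ _ _ hk) /=.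
rewrite !mulrDr addrA; congr (_ + _); last first.
  rewrite big_nat_recr //= exprS.
  set D := \prod_(k <= l < n.+2 | l != n.+1) _.
  set P := \prod_(1 <= h < m.+1) _.
  have hD : D != 0 by apply: prod_nat_neq0 => i /andP[ki]; rewrite ltnS => iL; rewrite eq_sym => ne; apply: hdiff; rewrite ?ki ?iL ?hk ?leqnn.
  have hP : P != 0 by apply: prod_nat_neq0 => i _ _.
  field; by rewrite hD hP hxy.
rewrite !mulr_sumr -big_split /=.
apply: eq_big_nat => j /andP[kj jn].
have E : \prod_(k <= l < n.+2 | l != j) (x j - x l) =
  (\prod_(k <= l < n.+1 | l != j) (x j - x l)) * (x j - x n.+1).
  rewrite big_mkcond /= (big_nat_recr _ _ _ hk) /= -big_mkcond /=.
  by rewrite ifT // neq_ltn jn orbT.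
rewrite E [\prod_(1 <= h < m.+2) _]big_nat_recr //=.
set D := \prod_(k <= l < n.+1 | l != j) _.
set P := \prod_(1 <= h < m.+1) _.
have hD : D != 0 by apply: prod_nat_neq0 => i /andP[ki iL] ne; apply: hdiff; rewrite ?ki ?kj /= 1?ltnW // eq_sym.
have hP : P != 0 by apply: prod_nat_neq0 => i _ _.
have hjn : x j - x n.+1 != 0 by apply: hdiff; rewrite ?kj ?hk ?leqnn ?neq_ltn ?jn //= ltnW.
rewrite exprS; field; by rewrite hD hP hxy hjn.
Qed.
End G.
Arguments G {R}.
Arguments G_rec {R x y k n} m N.

Section Urn.
Variable R : realFieldType.
Variables a b : nat -> R.
Hypothesis ha : forall i, 0 < a i.
Hypothesis hb : forall i, 0 < b i.
Hypothesis hadist : forall j l : nat, (1 <= j)%N -> (j < l)%N -> a j != a l.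
Hypothesis hbdist : forall j l : nat, (1 <= j)%N -> (j < l)%N -> b j != b l.

Lemma urn_SS n m k : urnP a b n.+1 m.+1 k =
  b m.+1 / (a n.+1 + b m.+1) * urnP a b n m.+1 k +
  a n.+1 / (a n.+1 + b m.+1) * urnP a b n.+1 m k.
Proof. by []. Qed.

Lemma urn_0m m k : urnP a b 0 m k = (k == 0%N)%:R.
Proof. by []. Qed.

Lemma urn_n0 n k : urnP a b n.+1 0 k = (k == n.+1)%:R.
Proof. by []. Qed.

Lemma urn_lt k n m : (1 <= k)%N -> (n < k)%N -> urnP a b n m k = 0.
Proof.
move=> k1; elim: n m => [|n IH] m hn.
  by rewrite urn_0m; case: k k1 hn.
elim: m => [|m IHm].
  by rewrite urn_n0; case: eqP hn => // ->; rewrite ltnn.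
by rewrite urn_SS IH 1?ltnW // IHm mulr0 mulr0 addr0.
Qed.

Lemma apos i : a i != 0. Proof. exact: lt0r_neq0. Qed.
Lemma abpos i j : a i + b j != 0. Proof. by apply: lt0r_neq0; apply: addr_gt0. Qed.

Lemma G_Lg (x y : nat -> R) k n N : G x y k n 0 N = Lg x (index_iota k n.+1) N.
Proof.
by rewrite /G /Lg; apply: eq_bigr => j _; rewrite [\prod_(1 <= h < 1) _]big_geq // mulr1.
Qed.

Lemma G_empty (x y : nat -> R) k n m N : (n < k)%N -> G x y k n m N = 0.
Proof. by move=> h; rewrite /G big_geq. Qed.

Lemma Lg_iota (x : nat -> R) k n p :
  (forall j l, (k <= j)%N -> (j < l)%N -> (l <= n)%N -> x j != x l) ->
  (k <= n)%N -> (p <= n - k)%N -> Lg x (index_iota k n.+1) p = (p == (n - k)%N)%:R.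
Proof.
move=> hd kn hp; apply: Lg_main => //.
- by rewrite size_iota; lia.
- exact: iota_uniq.
- move=> i j; rewrite !mem_index_iota => /andP[ki iL] /andP[kj jL] e.
  apply/eqP; apply/negPn/negP; rewrite neq_ltn => /orP[] h.
    by move: (hd i j ki h ltac:(lia)); rewrite e eqxx.
  by move: (hd j i kj h ltac:(lia)); rewrite e eqxx.
Qed.

Lemma urn_k k : (1 <= k)%N -> forall n, (k <= n)%N -> forall m,
  urnP a b n m.+1 k = a k * G a b k n m.+1 (m.+1 + n - k - 1).
Proof.
move=> k1; elim=> [|n IH] hn; first by move: hn; case: k k1.
have hd : forall j l, (k <= j)%N -> (j < l)%N -> (l <= n.+1)%N -> a j != a l.
  by move=> j l kj jl _; apply: hadist => //; lia.
have HIH m : urnP a b n m.+1 k = a k * G a b k n m.+1 (m.+1 + n - k - 1).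
  case: (ltnP n k) => h; last exact: IH.
  by rewrite urn_lt // G_empty // mulr0.
elim=> [|m IHm].
  rewrite urn_SS urn_n0.
  case: (ltnP n k) => h.
    have ek : k = n.+1 by lia.
    rewrite urn_lt // ek eqxx mulr0 add0r /G big_nat1 big_nat1.
    rewrite big_mkcond big_nat1 eqxx /=.
    have -> : (1 + n.+1 - n.+1 - 1 = 0)%N by lia.
    rewrite expr0 mul1r; field; by rewrite abpos.
  rewrite HIH (_ : (k == n.+1) = false); last by apply/negbTE; lia.
  rewrite mulr0 addr0.
  have E1 : (1 + n.+1 - k - 1 = (1 + n - k - 1).+1)%N by lia.
  have := G_rec 0 (1 + n - k - 1) ha hb hd hn.
  rewrite -E1 G_Lg Lg_iota; last 3 first.
  - by move=> j l kj jl ln; apply: hd => //; lia.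
  - exact: hn.
  - lia.
  rewrite (_ : ((1 + n - k - 1 == n.+1 - k)%N) = false); last by apply/negbTE; lia.
  rewrite mulr0 addr0 => H.
  have -> : G a b k n.+1 1 (1 + n.+1 - k - 1) = b 1 * G a b k n 1 (1 + n - k - 1) / (a n.+1 + b 1).
    by rewrite -H; field; rewrite abpos.
  field; by rewrite abpos.
rewrite urn_SS HIH IHm.
have E1 : (m.+2 + n.+1 - k - 1 = (m.+2 + n - k - 1).+1)%N by lia.
have E2 : (m.+1 + n.+1 - k - 1 = (m.+2 + n - k - 1))%N by lia.
have := G_rec m.+1 (m.+2 + n - k - 1) ha hb hd hn.
rewrite -E1 E2 => H.
have -> : G a b k n.+1 m.+2 (m.+2 + n.+1 - k - 1) =
  (b m.+2 * G a b k n m.+2 (m.+2 + n - k - 1) + a n.+1 * G a b k n.+1 m.+1 (m.+2 + n - k - 1)) / (a n.+1 + b m.+2).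
  by rewrite -H; field; rewrite abpos.
field; by rewrite abpos.
Qed.

Lemma urn_zero n m : urnP a b n m.+1 0 = G b a 1 m.+1 n (n + m.+1 - 1).
Proof.
have hd : forall N j l, (1 <= j)%N -> (j < l)%N -> (l <= N)%N -> b j != b l.
  by move=> N j l kj jl _; apply: hbdist.
elim: n m => [|n IH] m.
  rewrite urn_0m eqxx G_Lg Lg_iota //; first by rewrite add0n eqxx.
  by move=> j l j1 jl _; apply: hbdist.
have hba i j : b i + a j != 0 by rewrite addrC abpos.
elim: m => [|m IHm].
  rewrite urn_SS urn_n0 /= mulr0 addr0 IH.
  have := G_rec n n hb ha (hd 1%N) (leqnn 1).
  rewrite (@G_empty _ _ 1 0) // mulr0 add0r.
  rewrite (_ : (n.+1 + 1 - 1 = n.+1)%N); last by lia.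
  rewrite (_ : (n + 1 - 1 = n)%N); last by lia.
  move=> H.
  have -> : G b a 1 1 n.+1 n.+1 = b 1 * G b a 1 1 n n / (b 1 + a n.+1).
    by rewrite -H; field; rewrite hba.
  rewrite (addrC (a _)); field; by rewrite hba.
rewrite urn_SS IH IHm.
have E1 : (n.+1 + m.+2 - 1 = (n + m.+2 - 1).+1)%N by lia.
have E2 : (n.+1 + m.+1 - 1 = (n + m.+2 - 1))%N by lia.
have := G_rec n (n + m.+2 - 1) hb ha (hd m.+2) (ltn0Sn _).
rewrite -E1 E2 => H.
have -> : G b a 1 m.+2 n.+1 (n.+1 + m.+2 - 1) =
  (a n.+1 * G b a 1 m.+1 n.+1 (n + m.+2 - 1) + b m.+2 * G b a 1 m.+2 n (n + m.+2 - 1)) / (b m.+2 + a n.+1).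
  by rewrite -H; field; rewrite hba.
rewrite (addrC (a _)); field; by rewrite hba.
Qed.

Lemma prod_seqN (I : Type) (r : seq I) (P : pred I) (F : I -> R) :
  \prod_(i <- r | P i) - F i = (-1) ^+ (count P r) * \prod_(i <- r | P i) F i.
Proof.
elim: r => [|x r IH]; first by rewrite !big_nil mulr1.
rewrite !big_cons /=; case: (P x) => //=.
by rewrite IH add1n exprS; ring.
Qed.

Definition SB k n m p := \sum_(1 <= l < m.+1) b l ^+ p /
  ((\prod_(k <= j < n.+1) (b l + a j)) * (\prod_(1 <= h < m.+1 | h != l) (b l - b h))).

Definition cc (i : nat + nat) : R := match i with inl j => a j | inr h => - b h end.

Lemma mixed k n m p : (1 <= k)%N -> (k <= n)%N -> (p < n.+1 - k + m)%N ->
  G a b k n m p + (-1) ^+ (p + (n.+1 - k) + m.-1) * SB k n m p =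
  (p == (n.+1 - k + m).-1)%:R.
Proof.
move=> k1 kn hp.
set s := [seq inl j | j <- index_iota k n.+1] ++ [seq inr h | h <- index_iota 1 m.+1].
have ss : size s = (n.+1 - k + m)%N by rewrite size_cat !size_map !size_iota; lia.
have us : uniq s.
  have iL : injective (@inl nat nat) by move=> ? ? [].
  have iR : injective (@inr nat nat) by move=> ? ? [].
  rewrite cat_uniq !map_inj_uniq ?iota_uniq //= andbT.
  by apply/hasPn => x /mapP[h _ ->]; apply/mapP => -[j _].
have ic : {in s &, injective cc}.
  have dis : forall (u0 v0 : nat), a u0 != - b v0.
    move=> u0 v0; apply/eqP => e; have := ha u0; rewrite e oppr_gt0 => /(lt_trans (hb v0)).
    by rewrite ltxx.
  have mL i : inl i \in s -> (k <= i < n.+1)%N.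
    rewrite mem_cat => /orP[] /mapP[u hu e]; last by [].
    by case: e => ->; rewrite -mem_index_iota.
  have mR i : inr i \in s -> (1 <= i < m.+1)%N.
    rewrite mem_cat => /orP[] /mapP[u hu e]; first by [].
    by case: e => ->; rewrite -mem_index_iota.
  move=> [u|u] [v|v] /= hu hv e.
  - move: (mL _ hu) (mL _ hv) => hu' hv'.
    case: (ltngtP u v) => [h|h|->] //.
      by move: (hadist u v ltac:(lia) h); rewrite e eqxx.
    by move: (hadist v u ltac:(lia) h); rewrite e eqxx.
  - by move/eqP: (dis u v); rewrite e.
  - by move/eqP: (dis v u); rewrite e.
  - move/eqP: e; rewrite eqr_opp => /eqP e.
    move: (mR _ hu) (mR _ hv) => hu' hv'.
    case: (ltngtP u v) => [h|h|->] //.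
      by move: (hbdist u v ltac:(lia) h); rewrite e eqxx.
    by move: (hbdist v u ltac:(lia) h); rewrite e eqxx.
have L := @Lg_main R _ cc (size s).-1 s ltac:(rewrite prednK // ss; lia) us ic p ltac:(rewrite ss; lia).
rewrite ss in L; rewrite -L /Lg big_cat /= !big_map.
congr (_ + _).
  rewrite /G; apply: eq_bigr => j _.
  rewrite big_cat /= !big_map.
  congr (_ / (_ * _)).
  by apply: eq_big => h // _; rewrite /= opprK.
rewrite /SB mulr_sumr; apply: eq_big_nat => l hl.
rewrite big_cat /= !big_map.
have P1 : \prod_(k <= j0 < n.+1 | inl j0 != inr l) (cc (inr l) - cc (inl j0)) =
   (-1) ^+ (n.+1 - k) * \prod_(k <= j < n.+1) (b l + a j).
  transitivity (\prod_(j0 <- index_iota k n.+1 | true) - (b l + a j0)).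
    by apply: eq_big => // j0 _; rewrite /= opprD.
  by rewrite prod_seqN count_predT size_iota.
have P2 : \prod_(1 <= j0 < m.+1 | inr j0 != inr l) (cc (inr l) - cc (inr j0)) =
   (-1) ^+ m.-1 * \prod_(1 <= h < m.+1 | h != l) (b l - b h).
  transitivity (\prod_(h <- index_iota 1 m.+1 | h != l) - (b l - b h)).
    by apply: eq_big => // h _; rewrite /= opprK opprB addrC.
  rewrite prod_seqN; congr (_ ^+ _ * _).
  have := count_predC (pred1 l) (index_iota 1 m.+1).
  rewrite count_uniq_mem ?iota_uniq // mem_index_iota hl size_iota.
  change (count (predC (pred1 l)) (index_iota 1 m.+1)) with
    (count (fun h => h != l) (index_iota 1 m.+1)).
  move=> e; have e2 : (1 + count (fun i : nat => i != l) (index_iota 1 m.+1) = m.+1 - 1)%N by rewrite -e.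
  lia.
rewrite P1 P2 /= (exprNn (b l) p) !invfM !invr_sign !exprD; ring.
Qed.
End Urn.
Theorem theorem2 (R : realFieldType) (a b : nat -> R)
  (ha : forall i, 0 < a i) (hb : forall i, 0 < b i)
  (hadist : forall j l : nat, (1 <= j)%N -> (j < l)%N -> a j != a l)
  (hbdist : forall j l : nat, (1 <= j)%N -> (j < l)%N -> b j != b l)
  (n m : nat) (hn : (1 <= n)%N) (hm : (1 <= m)%N) :
  (forall k : nat, (1 <= k <= n)%N ->
     urnP a b n m k =
       a k * \sum_(k <= j < n.+1)
          a j ^+ (m + n - k - 1) /
          ((\prod_(k <= l < n.+1 | l != j) (a j - a l)) *
           (\prod_(1 <= h < m.+1) (a j + b h)))
     /\
     urnP a b n m k =
       a k * \sum_(1 <= l < m.+1)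
          b l ^+ (n + m - 1 - k) /
          ((\prod_(k <= j < n.+1) (b l + a j)) *
           (\prod_(1 <= h < m.+1 | h != l) (b l - b h))))
  /\
  (urnP a b n m 0 =
     1 - \sum_(1 <= j < n.+1)
          a j ^+ (n + m - 1) /
          ((\prod_(1 <= l < n.+1 | l != j) (a j - a l)) *
           (\prod_(1 <= h < m.+1) (a j + b h)))
   /\
   urnP a b n m 0 =
     \sum_(1 <= l < m.+1)
          b l ^+ (n + m - 1) /
          ((\prod_(1 <= j < n.+1) (b l + a j)) *
           (\prod_(1 <= h < m.+1 | h != l) (b l - b h)))).
Proof.
case: m hm => // m _.
split.
  move=> k /andP[k1 kn].
  have U := @urn_k R a b ha hb hadist k k1 n kn m.
  have Mx := @mixed R a b ha hb hadist hbdist k n m.+1 (m.+1 + n - k - 1) k1 kn ltac:(lia).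
  rewrite (_ : ((m.+1 + n - k - 1) == (n.+1 - k + m.+1).-1)%N = false) in Mx; last first.
    by apply/negbTE; lia.
  rewrite (_ : (m.+1 + n - k - 1 + (n.+1 - k) + m.+1.-1 = (2 * (m + n - k)).+1)%N) in Mx;
    last by lia.
  rewrite exprS exprM expr2 mulrNN mulr1 expr1n mulr1 mulN1r in Mx.
  move/subr0_eq: Mx => Mx.
  split.
    by rewrite U.
  rewrite U (_ : (n + m.+1 - 1 - k = m.+1 + n - k - 1)%N); last by lia.
  by rewrite Mx.
have U := @urn_zero R a b ha hb hbdist n m.
have Mx := @mixed R a b ha hb hadist hbdist 1 n m.+1 (n + m.+1 - 1) (leqnn 1) hn ltac:(lia).
rewrite (_ : ((n + m.+1 - 1) == (n.+1 - 1 + m.+1).-1)%N) in Mx; last by apply/eqP; lia.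
rewrite (_ : (n + m.+1 - 1 + (n.+1 - 1) + m.+1.-1 = (2 * (n + m)))%N) in Mx; last by lia.
rewrite exprM expr2 mulrNN mulr1 expr1n mul1r in Mx.
have GSB : G b a 1 m.+1 n (n + m.+1 - 1) = SB R a b 1 n m.+1 (n + m.+1 - 1).
  by rewrite /G /SB; apply: eq_bigr => l _; rewrite [X in _ / X]mulrC.
split.
  transitivity (1 - G a b 1 n m.+1 (n + m.+1 - 1)); last by [].
  by rewrite U GSB -[1]Mx [G _ _ _ _ _ _ + _]addrC addrK.
by rewrite U GSB.
Qed.
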